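(* The reduced tight span $\mathbf{F}(\mathbb{S}^1)=\{f:[0,\pi]\to\mathbb{R}\ 1\text{-Lipschitz}:0\le f\le\pi,\ f(0)+f(\pi)=\pi\}$ with the sup norm is isometric to $\mathbf{E}(\mathbb{S}^1)$.
   Context: $\mathbb{S}^1=\mathbb{R}/2\pi$ with its geodesic metric. For a metric space $X$, $\Delta(X)=\{f:X\to\mathbb{R}\text{ bounded}:f(x)+f(x')\ge d_X(x,x')\}$ and the tight span $\mathbf{E}(X)$ is the set of pointwise-minimal elements of $\Delta(X)$ with the sup-norm metric. *)

(* Defs.v *)
From Stdlib Require Import Reals.
From Coquelicot Require Import Coquelicot.
Open Scope R_scope.

(* The circle S^1 = R/2piZ, represented by its canonical representatives in [0, 2pi). *)
Definition S1 : Type := { x : R | 0 <= x < 2 * PI }.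

Definition d_S1 (x y : S1) : R :=
  Rmin (Rabs (proj1_sig x - proj1_sig y)) (2 * PI - Rabs (proj1_sig x - proj1_sig y)).

Definition bounded {T : Type} (f : T -> R) : Prop :=
  exists M : R, forall x, Rabs (f x) <= M.

Definition in_Delta (f : S1 -> R) : Prop :=
  bounded f /\ forall x x' : S1, f x + f x' >= d_S1 x x'.

Definition in_E (f : S1 -> R) : Prop :=
  in_Delta f /\
  forall g : S1 -> R, in_Delta g -> (forall x, g x <= f x) -> g = f.

Definition E_S1 : Type := { f : S1 -> R | in_E f }.

Definition Ipi : Type := { t : R | 0 <= t <= PI }.

Definition Ipi0 : Ipi := exist _ 0 (conj (Rle_refl 0) (Rlt_le _ _ PI_RGT_0)).
Definition Ipipi : Ipi := exist _ PI (conj (Rlt_le _ _ PI_RGT_0) (Rle_refl PI)).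

Definition in_F (f : Ipi -> R) : Prop :=
  (forall s t : Ipi, Rabs (f s - f t) <= Rabs (proj1_sig s - proj1_sig t)) /\
  (forall t : Ipi, 0 <= f t <= PI) /\
  f Ipi0 + f Ipipi = PI.

Definition F_S1 : Type := { f : Ipi -> R | in_F f }.

Definition sup_dist {T : Type} (f g : T -> R) : Rbar :=
  Lub_Rbar (fun v => exists x : T, v = Rabs (f x - g x)).

Definition dE (f g : E_S1) : Rbar := sup_dist (proj1_sig f) (proj1_sig g).
Definition dF (f g : F_S1) : Rbar := sup_dist (proj1_sig f) (proj1_sig g).

(* Main.v *)
Require Import Defs.
From Stdlib Require Import Reals Lra ProofIrrelevance FunctionalExtensionality Classical.
From Coquelicot Require Import Coquelicot.
Open Scope R_scope.

Lemma S1_eq (x y : S1) : proj1_sig x = proj1_sig y -> x = y.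
Proof. destruct x, y; simpl; intros ->; f_equal; apply proof_irrelevance. Qed.
Lemma Ipi_eq (x y : Ipi) : proj1_sig x = proj1_sig y -> x = y.
Proof. destruct x, y; simpl; intros ->; f_equal; apply proof_irrelevance. Qed.

Ltac kill_abs := repeat match goal with
  | |- context [Rabs ?u] => let H := fresh in destruct (Rle_or_lt 0 u) as [H|H];
        [rewrite (Rabs_pos_eq u H) in * | rewrite (Rabs_left u H) in *]
  | H0 : context [Rabs ?u] |- _ => let H := fresh in destruct (Rle_or_lt 0 u) as [H|H];
        [rewrite (Rabs_pos_eq u H) in * | rewrite (Rabs_left u H) in *]
  end.
Ltac dcase := unfold d_S1, Rmin in *; simpl in *; repeat (destruct Rle_dec); kill_abs; lra.

Lemma d_tri (x y z : S1) : d_S1 x z <= d_S1 x y + d_S1 y z.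
Proof. destruct x as [a Ha], y as [b Hb], z as [c Hc]; simpl. pose proof PI_RGT_0. dcase. Qed.

Lemma d_anti (x y z : S1) : d_S1 x y = PI -> d_S1 x z + d_S1 z y <= PI.
Proof. destruct x as [a Ha], y as [b Hb], z as [c Hc]; simpl. pose proof PI_RGT_0. dcase. Qed.

Lemma d_refl (x : S1) : d_S1 x x = 0.
Proof. destruct x as [a Ha]; simpl. pose proof PI_RGT_0. dcase. Qed.

Lemma d_sym (x y : S1) : d_S1 x y = d_S1 y x.
Proof. destruct x as [a Ha], y as [b Hb]; simpl. pose proof PI_RGT_0. dcase. Qed.

Section ESide.
Variable h : S1 -> R.
Hypothesis Hh : in_E h.

Lemma h_nonneg x : 0 <= h x.
Proof. destruct Hh as [[_ HD] _]. pose proof (HD x x). rewrite d_refl in H. lra. Qed.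

Lemma h_approx x eps : 0 < eps -> exists y, h x + h y < d_S1 x y + eps.
Proof.
  intro Heps. apply NNPP. intro Hn.
  assert (Hall : forall y, h x + h y >= d_S1 x y + eps).
  { intro y. pose proof (not_ex_all_not _ _ Hn y). simpl in H. lra. }
  assert (Hx : 0 < h x) by (pose proof (Hall x); rewrite d_refl in H; lra).
  set (del := Rmin eps (h x)).
  assert (Hdel : 0 < del /\ del <= eps /\ del <= h x).
  { unfold del, Rmin; destruct Rle_dec; lra. }
  set (g := fun z : S1 => if Req_dec_T (proj1_sig z) (proj1_sig x) then h z - del else h z).
  destruct Hh as [[[M HM] HD] Hmin].
  assert (Hg : g = h).
  { apply Hmin.
    - split.
      + exists (M + del). intro z. unfold g. destruct Req_dec_T.
        * pose proof (HM z). split_Rabs; lra.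
        * pose proof (HM z). lra.
      + intros z z'. unfold g.
        destruct Req_dec_T as [e1|e1]; destruct Req_dec_T as [e2|e2].
        * rewrite (S1_eq _ _ e1), (S1_eq _ _ e2), d_refl. lra.
        * rewrite (S1_eq _ _ e1). pose proof (Hall z'). lra.
        * rewrite (S1_eq _ _ e2), d_sym. pose proof (Hall z). lra.
        * apply HD.
    - intro z. unfold g. destruct Req_dec_T; lra. }
  assert (E : g x = h x) by (rewrite Hg; reflexivity).
  unfold g in E. destruct Req_dec_T; [lra | congruence].
Qed.

Lemma h_lip x z : h x - h z <= d_S1 x z.
Proof.
  apply Rnot_lt_le. intro Hc.
  destruct (h_approx x (h x - h z - d_S1 x z)) as [y Hy]; [lra|].
  destruct Hh as [[_ HD] _]. pose proof (HD z y). pose proof (d_tri x z y). lra.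
Qed.

Lemma h_anti x y : d_S1 x y = PI -> h x + h y = PI.
Proof.
  intro Hd. destruct Hh as [[_ HD] _]. pose proof (HD x y).
  apply Rle_antisym; [|lra].
  apply Rnot_lt_le. intro Hc.
  destruct (h_approx x (h x + h y - PI)) as [z Hz]; [lra|].
  pose proof (h_lip y z). rewrite d_sym in H0. pose proof (d_anti x y z Hd). lra.
Qed.
End ESide.

Definition clamp (t : R) : Ipi.
Proof.
  exists (Rmax 0 (Rmin t PI)). pose proof PI_RGT_0. split.
  - apply Rmax_l.
  - unfold Rmax, Rmin; repeat destruct Rle_dec; lra.
Defined.

Lemma clamp_id t : 0 <= t <= PI -> proj1_sig (clamp t) = t.
Proof. intros. simpl. unfold Rmax, Rmin; repeat destruct Rle_dec; lra. Qed.

Lemma clamp_id' (t : Ipi) : clamp (proj1_sig t) = t.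
Proof. apply Ipi_eq. apply clamp_id. apply (proj2_sig t). Qed.

Lemma clamp_lip s t : Rabs (proj1_sig (clamp s) - proj1_sig (clamp t)) <= Rabs (s - t).
Proof. simpl. pose proof PI_RGT_0. unfold Rmax, Rmin; repeat destruct Rle_dec; kill_abs; lra. Qed.

Definition fr (f : Ipi -> R) (t : R) : R := f (clamp t).

Definition ext (f : Ipi -> R) (x : S1) : R :=
  if Rle_dec (proj1_sig x) PI then fr f (proj1_sig x) else PI - fr f (proj1_sig x - PI).

Definition anti (x : S1) : S1.
Proof.
  destruct x as [a Ha]. pose proof PI_RGT_0. destruct (Rlt_le_dec a PI).
  - exists (a + PI). lra.
  - exists (a - PI). lra.
Defined.

Lemma anti_spec x : (proj1_sig x < PI /\ proj1_sig (anti x) = proj1_sig x + PI)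
                 \/ (PI <= proj1_sig x /\ proj1_sig (anti x) = proj1_sig x - PI).
Proof. destruct x as [a Ha]; simpl. destruct Rlt_le_dec; simpl; auto. Qed.

Lemma d_antipode x : d_S1 x (anti x) = PI.
Proof.
  pose proof PI_RGT_0. pose proof (anti_spec x). destruct x as [a Ha], (anti _) as [b Hb].
  simpl in *. dcase.
Qed.

Section FSide.
Variable f : Ipi -> R.
Hypothesis Hf : in_F f.

Lemma fr_lipR s t : s <= t -> fr f t - fr f s <= t - s /\ fr f s - fr f t <= t - s.
Proof.
  intro H. destruct Hf as [HL _]. pose proof (HL (clamp t) (clamp s)).
  pose proof (clamp_lip t s). unfold fr. kill_abs; lra.
Qed.

Lemma fr_bounds t : 0 <= fr f t <= PI.
Proof. destruct Hf as [_ [HB _]]. apply HB. Qed.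

Lemma fr_end : fr f 0 + fr f PI = PI.
Proof.
  destruct Hf as [_ [_ HE]]. unfold fr.
  replace (clamp 0) with Ipi0. replace (clamp PI) with Ipipi. exact HE.
  - apply Ipi_eq. rewrite clamp_id; simpl; auto. pose proof PI_RGT_0; lra.
  - apply Ipi_eq. rewrite clamp_id; simpl; auto. pose proof PI_RGT_0; lra.
Qed.

End FSide.

Ltac lp f Hf s t := let H := fresh in destruct (Rle_or_lt s t) as [H|H];
  [destruct (fr_lipR f Hf s t H) | destruct (fr_lipR f Hf t s (Rlt_le _ _ H))].
Ltac dcase2 := unfold d_S1, Rmin in *; cbn [proj1_sig] in *; repeat (destruct Rle_dec); kill_abs; lra.
Ltac lk f Hf s t := let H := fresh in assert (H : s <= t) by lra; destruct (fr_lipR f Hf s t H).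

Section ExtE.
Variable f : Ipi -> R.
Hypothesis Hf : in_F f.

Lemma ext_pair x y : ext f x + ext f y >= d_S1 x y.
Proof.
  pose proof PI_RGT_0. pose proof (fr_end f Hf).
  destruct x as [a Ha], y as [b Hb]. unfold ext; simpl.
  destruct (Rle_dec a PI); destruct (Rle_dec b PI);
  [ lk f Hf 0 a; lk f Hf a PI; lk f Hf 0 b; lk f Hf b PI; dcase2
  | lk f Hf 0 a; lk f Hf a PI; lk f Hf 0 (b-PI); lk f Hf (b-PI) PI; lp f Hf a (b-PI); dcase2
  | lk f Hf 0 b; lk f Hf b PI; lk f Hf 0 (a-PI); lk f Hf (a-PI) PI; lp f Hf b (a-PI); dcase2
  | lk f Hf 0 (b-PI); lk f Hf (b-PI) PI; lk f Hf 0 (a-PI); lk f Hf (a-PI) PI; dcase2 ].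
Qed.

Lemma ext_anti x : ext f x + ext f (anti x) = PI.
Proof.
  pose proof PI_RGT_0. pose proof (fr_end f Hf). pose proof (proj2_sig x) as Hx.
  destruct (anti_spec x) as [[h1 h2]|[h1 h2]]; unfold ext; rewrite h2;
  set (a := proj1_sig x) in *; simpl in Hx.
  - destruct (Rle_dec a PI); [|lra]. destruct (Rle_dec (a + PI) PI).
    + lk f Hf 0 a. lk f Hf (a+PI) PI. lra.
    + replace (a + PI - PI) with a by ring. lra.
  - destruct (Rle_dec (a - PI) PI); [|lra]. destruct (Rle_dec a PI).
    + lk f Hf 0 (a-PI). lk f Hf a PI. lra.
    + lra.
Qed.

Lemma ext_bounded : Defs.bounded (ext f).
Proof.
  exists PI. intro x. unfold ext. pose proof (fr_bounds f Hf (proj1_sig x)).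
  pose proof (fr_bounds f Hf (proj1_sig x - PI)).
  destruct Rle_dec; apply Rabs_le; lra.
Qed.

Lemma ext_in_E : in_E (ext f).
Proof.
  assert (HD : in_Delta (ext f)) by (split; [apply ext_bounded | apply ext_pair]).
  split; [exact HD|].
  intros g [_ Hg] Hle. apply functional_extensionality. intro x.
  apply Rle_antisym; [apply Hle|].
  pose proof (Hg x (anti x)). rewrite d_antipode in H.
  pose proof (Hle (anti x)). pose proof ext_anti x. lra.
Qed.

End ExtE.

Lemma sig_eq_pi {A : Type} {P : A -> Prop} (u v : sig P) : proj1_sig u = proj1_sig v -> u = v.
Proof. destruct u, v; simpl; intros ->; f_equal; apply proof_irrelevance. Qed.

Definition Phi (f : F_S1) : E_S1 := exist _ (ext (proj1_sig f)) (ext_in_E _ (proj2_sig f)).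

Lemma iota_pf (t : Ipi) : 0 <= proj1_sig t < 2 * PI.
Proof. destruct t as [t Ht]; simpl. pose proof PI_RGT_0. lra. Qed.
Definition iota (t : Ipi) : S1 := exist _ (proj1_sig t) (iota_pf t).

Lemma ext_iota f t : ext f (iota t) = f t.
Proof.
  unfold ext, iota; simpl. destruct (proj2_sig t). destruct Rle_dec; [|contradiction].
  unfold fr. rewrite clamp_id'. reflexivity.
Qed.

Theorem proposition3p5 :
  exists Phi : F_S1 -> E_S1,
    (forall f g : F_S1, dE (Phi f) (Phi g) = dF f g) /\
    (forall f g : F_S1, Phi f = Phi g -> f = g) /\
    (forall h : E_S1, exists f : F_S1, Phi f = h).
Proof.
  exists Phi. split; [|split].
  - intros [f Hf] [g Hg]. unfold dE, dF, sup_dist, Phi; simpl.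
    apply Lub_Rbar_eqset. intro v. split.
    + intros [x ->]. unfold ext. destruct Rle_dec.
      * exists (clamp (proj1_sig x)). reflexivity.
      * exists (clamp (proj1_sig x - PI)). unfold fr. rewrite <- Rabs_Ropp. f_equal. ring.
    + intros [t ->]. exists (iota t). rewrite !ext_iota. reflexivity.
  - intros [f Hf] [g Hg] E. apply (f_equal (@proj1_sig _ _)) in E. simpl in E.
    assert (f = g).
    { apply functional_extensionality. intro t. rewrite <- (ext_iota f t), <- (ext_iota g t), E.
      reflexivity. }
    subst g. f_equal. apply proof_irrelevance.
  - intros [h Hh].
    set (f := fun t => h (iota t)).
    assert (Hf : in_F f).
    { split; [|split].
      - intros s t. unfold f. apply Rabs_le.
        pose proof (h_lip h Hh (iota s) (iota t)). pose proof (h_lip h Hh (iota t) (iota s)).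
        assert (Hd : forall x y : S1, d_S1 x y <= Rabs (proj1_sig x - proj1_sig y))
          by (intros; apply Rmin_l).
        pose proof (Hd (iota s) (iota t)). pose proof (Hd (iota t) (iota s)).
        simpl in *. rewrite Rabs_minus_sym in H2. kill_abs; lra.
      - intro t. unfold f. split; [apply h_nonneg; exact Hh|].
        pose proof (h_anti h Hh _ _ (d_antipode (iota t))).
        pose proof (h_nonneg h Hh (anti (iota t))). lra.
      - unfold f. apply h_anti; [exact Hh|]. unfold d_S1, iota; simpl.
        pose proof PI_RGT_0. unfold Rmin; destruct Rle_dec; kill_abs; lra. }
    exists (exist _ f Hf). unfold Phi; simpl.
    assert (ext f = h).
    { apply functional_extensionality. intro x. unfold ext, fr, f.
      pose proof (proj2_sig x) as Hx. simpl in Hx. pose proof PI_RGT_0.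
      destruct Rle_dec.
      - f_equal. apply S1_eq. simpl. apply clamp_id. lra.
      - assert (Hs : h x + h (iota (clamp (proj1_sig x - PI))) = PI).
        { apply h_anti; [exact Hh|]. unfold d_S1, iota. cbn [proj1_sig]. rewrite clamp_id by lra.
          unfold Rmin; destruct Rle_dec; kill_abs; lra. }
        lra. }
    apply sig_eq_pi. exact H.
Qed.
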